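(* For every vertex $v$ of $K$ and every $n\in\mathbb N$, $$B(\omega(v),2n-2,\omega(K))\subset \omega(B(v,n,K))\subset B(\omega(v),2n+2,\omega(K)).$$
   Context: $K$ is the pentagonal combinatorial tiling: a 2-dimensional CW-complex homeomorphic to the open disk, obtained as follows. The subdivision rule $\omega$ acts on a pentagon with boundary vertices $v_1,\dots,v_5$ in cyclic order (indices mod 5): add a vertex $m_i$ inside each edge $v_iv_{i+1}$, interior vertices $c_1,\dots,c_5$, edges $c_ic_{i+1}$ and $c_im_i$, and replace the face by the central pentagon $c_1\cdots c_5$ and petals $v_i\,m_i\,c_i\,c_{i-1}\,m_{i-1}$. $K_0$ is one pentagon, $K_n=\omega^n(K_0)$, $K_n$ embeds onto the central superpentagon $\omega^n(\text{central face of }\omega(K_0))$ of $K_{n+1}$, and $K$ is the direct limit. $\omega(K)$ is the complex on the same space obtained by applying $\omega$ to every face of $K$; for a subcomplex $P$, $\omega(P)$ is the union of the subdivisions of its faces, a subcomplex of $\omega(K)$; a vertex $v$ of $K$ is also a vertex $\omega(v)$ of $\omega(K)$. For a complex $L$, $B(v,n,L)$ is the subcomplex consisting of the faces all of whose vertices are at edge-path distance at most $n$ from $v$, with their edges and vertices. *)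

(* Defs.v *)
From mathcomp Require Import all_boot.
From Stdlib Require Import Relations.Relation_Definitions Relations.Relation_Operators.

(* Pentagonal 2-complexes.  Vertices, edges and faces are types; every  *)
(* edge has two ends; every face is a pentagon with boundary vertices    *)
(* bd f 0 .. bd f 4 (cyclic order) and boundary edges fe f i joining     *)
(* bd f i and bd f (i+1); fo f i tells whether fe f i is traversed in    *)
(* the direction of its ends (true) or backwards (false).                *)
Record cplx := Cplx {
  cV : Type; cE : Type; cF : Type;
  ends : cE -> cV * cV;
  bd : cF -> 'I_5 -> cV;
  fe : cF -> 'I_5 -> cE;
  fo : cF -> 'I_5 -> bool }.
Arguments ends {c}. Arguments bd {c}. Arguments fe {c}. Arguments fo {c}.

Definition nxt (i : 'I_5) : 'I_5 := ordS i.
Definition prv (i : 'I_5) : 'I_5 := ord_pred i.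

(* new faces: central pentagon (f,None), petal (f,Some i) =             *)
(*            v_i m_i c_i c_{i-1} m_{i-1}  (m_i = midpoint of fe f i)   *)
Section Omega.
Variable L : cplx.

Definition oV := ((cV L + cE L) + (cF L * 'I_5))%type.
Definition old (v : cV L) : oV := inl (inl v).
Definition mid (e : cE L) : oV := inl (inr e).
Definition cen (f : cF L) (i : 'I_5) : oV := inr (f, i).

Definition oE := (((cE L * bool) + (cF L * 'I_5)) + (cF L * 'I_5))%type.
(* half e false = [ends.1, m(e)],  half e true = [m(e), ends.2] *)
Definition half (e : cE L) (b : bool) : oE := inl (inl (e, b)).
Definition ring (f : cF L) (i : 'I_5) : oE := inl (inr (f, i)).
Definition spoke (f : cF L) (i : 'I_5) : oE := inr (f, i).

Definition oF := (cF L * option 'I_5)%type.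

Definition o_ends (x : oE) : oV * oV :=
  match x with
  | inl (inl (e, false)) => (old (ends e).1, mid e)
  | inl (inl (e, true)) => (mid e, old (ends e).2)
  | inl (inr (f, i)) => (cen f i, cen f (nxt i))
  | inr (f, i) => (cen f i, mid (fe f i))
  end.

Definition o_bd (g : oF) (j : 'I_5) : oV :=
  let: (f, o) := g in
  match o with
  | None => cen f j
  | Some i =>
      match val j with
      | 0 => old (bd f i)
      | 1 => mid (fe f i)
      | 2 => cen f i
      | 3 => cen f (prv i)
      | _ => mid (fe f (prv i))
      end
  end.

Definition o_fe (g : oF) (j : 'I_5) : oE :=
  let: (f, o) := g in
  match o with
  | None => ring f j
  | Some i =>
      match val j with
      | 0 => half (fe f i) (~~ fo f i)
      | 1 => spoke f i
      | 2 => ring f (prv i)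
      | 3 => spoke f (prv i)
      | _ => half (fe f (prv i)) (fo f (prv i))
      end
  end.

Definition o_fo (g : oF) (j : 'I_5) : bool :=
  let: (f, o) := g in
  match o with
  | None => true
  | Some i =>
      match val j with
      | 0 => fo f i
      | 1 => false
      | 2 => false
      | 3 => true
      | _ => fo f (prv i)
      end
  end.

Definition omega : cplx := Cplx oV oE oF o_ends o_bd o_fe o_fo.
End Omega.

Record morph (L L' : cplx) := Morph {
  mV : cV L -> cV L'; mE : cE L -> cE L'; mF : cF L -> cF L' }.
Arguments mV {L L'}. Arguments mE {L L'}. Arguments mF {L L'}.

Definition omega_morph (L L' : cplx) (p : morph L L') : morph (omega L) (omega L') :=
  Morph (omega L) (omega L')
    (fun x : oV L => match x with
       | inl (inl v) => old L' (mV p v)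
       | inl (inr e) => mid L' (mE p e)
       | inr (f, i) => cen L' (mF p f) i end)
    (fun x : oE L => match x with
       | inl (inl (e, b)) => half L' (mE p e) b
       | inl (inr (f, i)) => ring L' (mF p f) i
       | inr (f, i) => spoke L' (mF p f) i end)
    (fun g : oF L => (mF p g.1, g.2)).

Definition K0 : cplx :=
  Cplx 'I_5 'I_5 unit (fun i => (i, nxt i)) (fun _ i => i) (fun _ i => i) (fun _ _ => true).

Fixpoint Kn (n : nat) : cplx := match n with 0 => K0 | S m => omega (Kn m) end.

Definition iota0 : morph K0 (omega K0) :=
  Morph K0 (omega K0) (fun i => cen K0 tt i) (fun i => ring K0 tt i) (fun _ => (tt, None)).

(* iota n : K_n onto the central superpentagon omega^n(central face) of K_{n+1} *)
Fixpoint iota (n : nat) : morph (Kn n) (Kn n.+1) :=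
  match n return morph (Kn n) (Kn n.+1) with
  | 0 => iota0
  | S m => @omega_morph (Kn m) (Kn m.+1) (iota m)
  end.

(* Direct limits, as complexes whose cells are considered up to the     *)
(* identifications x ~ phi_n x (setoid presentation).                   *)
Record scplx := SCplx {
  sV : Type; sE : Type; sF : Type;
  sends : sE -> sV * sV;
  sbd : sF -> 'I_5 -> sV;
  sfe : sF -> 'I_5 -> sE;
  eqV : relation sV; eqE : relation sE; eqF : relation sF }.
Arguments sends {s}. Arguments sbd {s}. Arguments sfe {s}.
Arguments eqV {s}. Arguments eqE {s}. Arguments eqF {s}.

Section Limit.
Variable L : nat -> cplx.
Variable phi : forall n, morph (L n) (L n.+1).

Definition LV := {n : nat & cV (L n)}.
Definition LE := {n : nat & cE (L n)}.
Definition LF := {n : nat & cF (L n)}.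

Definition stepV : relation LV := fun p q =>
  exists n x, p = existT _ n x /\ q = existT _ n.+1 (mV (phi n) x).
Definition stepE : relation LE := fun p q =>
  exists n x, p = existT _ n x /\ q = existT _ n.+1 (mE (phi n) x).
Definition stepF : relation LF := fun p q =>
  exists n x, p = existT _ n x /\ q = existT _ n.+1 (mF (phi n) x).

Definition limit : scplx :=
  SCplx LV LE LF
    (fun e => (existT _ (projT1 e) (ends (projT2 e)).1,
               existT _ (projT1 e) (ends (projT2 e)).2))
    (fun f i => existT _ (projT1 f) (bd (projT2 f) i))
    (fun f i => existT _ (projT1 f) (fe (projT2 f) i))
    (clos_refl_sym_trans _ stepV)
    (clos_refl_sym_trans _ stepE)
    (clos_refl_sym_trans _ stepF).
End Limit.

Definition K : scplx := limit Kn iota.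

Definition omegaK : scplx := limit (fun n => omega (Kn n)) (fun n => @omega_morph (Kn n) (Kn n.+1) (iota n)).

Definition omega_v (v : sV K) : sV omegaK :=
  existT (fun n => cV (omega (Kn n))) (projT1 v) (old (Kn (projT1 v)) (projT2 v)).

(* omega(P) for a subcomplex of K given by its set of faces P: the faces
   of omega(K) obtained by subdividing faces of P *)
Definition omega_faces (P : sF K -> Prop) : sF omegaK -> Prop :=
  fun g => P (existT (fun n => cF (Kn n)) (projT1 g) (projT2 g).1).

Section Metric.
Variable L : scplx.

Definition adj (x y : sV L) : Prop :=
  exists e : sE L,
    (eqV x (sends e).1 /\ eqV y (sends e).2) \/ (eqV x (sends e).2 /\ eqV y (sends e).1).

Fixpoint walk (x : sV L) (p : seq (sV L)) : Prop :=
  match p with [::] => True | y :: q => adj x y /\ walk y q end.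

Definition dist_le (x y : sV L) (r : nat) : Prop :=
  exists p : seq (sV L), size p <= r /\ walk x p /\ eqV (last x p) y.

Definition ball (v : sV L) (r : nat) : sF L -> Prop :=
  fun f => forall i : 'I_5, dist_le v (sbd f i) r.

Record subcplx := Sub { subV : sV L -> Prop; subE : sE L -> Prop; subF : sF L -> Prop }.

Definition gen (P : sF L -> Prop) : subcplx :=
  Sub (fun x => exists f i, P f /\ eqV x (sbd f i))
      (fun e => exists f i, P f /\ eqE e (sfe f i))
      (fun f => exists f', P f' /\ eqF f f').

Definition sub_incl (A B : subcplx) : Prop :=
  (forall x, subV A x -> subV B x) /\
  (forall e, subE A e -> subE B e) /\
  (forall f, subF A f -> subF B f).
End Metric.
Arguments ball {L}. Arguments gen {L}. Arguments sub_incl {L}.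

(* Main.v *)
Require Import Defs.
From Stdlib Require Import Relations.Relation_Definitions Relations.Relation_Operators Lia.
From mathcomp Require Import all_boot zify.
Module MA.

Section Gen.
Variable s : scplx.
Hypothesis Er : forall x : sV s, eqV x x.
Hypothesis Es : forall x y : sV s, eqV x y -> eqV y x.
Hypothesis Et : forall x y z : sV s, eqV x y -> eqV y z -> eqV x z.

Lemma adj_sym x y : adj s x y -> adj s y x.
Proof. by case=> e [[h1 h2]|[h1 h2]]; exists e; [right|left]. Qed.

Lemma adj_eq x x' y y' : eqV x x' -> eqV y y' -> adj s x y -> adj s x' y'.
Proof.
move=> hx hy [e [[h1 h2]|[h1 h2]]]; exists e; [left|right]; split;
  by apply: Et; [apply: Es; eassumption|].
Qed.

Lemma walk_rcons x p z : walk s x p -> adj s (last x p) z -> walk s x (rcons p z).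
Proof.
elim: p x => [|y p IH] x /=; first by move=> _ h; split.
by case=> h1 h2 h3; split=> //; apply: IH.
Qed.

Lemma dist_refl x : dist_le s x x 0.
Proof. by exists [::]; split=> //; split=> //=. Qed.

Lemma dist_mono x y r r' : r <= r' -> dist_le s x y r -> dist_le s x y r'.
Proof. move=> h [p [h1 h2]]; exists p; split=> //; exact: leq_trans h. Qed.

Lemma dist_eq x y y' r : eqV y y' -> dist_le s x y r -> dist_le s x y' r.
Proof. move=> h [p [h1 [h2 h3]]]; exists p; split=> //; split=> //; exact: Et h3 h. Qed.

Lemma dist_snoc x y z r : dist_le s x y r -> adj s y z -> dist_le s x z r.+1.
Proof.
move=> [p [h1 [h2 h3]]] ha; exists (rcons p z); rewrite size_rcons last_rcons.
split=> //; split=> //; apply: walk_rcons=> //.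
by apply: adj_eq ha=> //; apply: Es.
Qed.

Lemma dist_cons x y z r : adj s x y -> dist_le s y z r -> dist_le s x z r.+1.
Proof. move=> ha [p [h1 [h2 h3]]]; by exists (y :: p). Qed.
End Gen.

Lemma eqK_r (x : sV K) : eqV x x. Proof. exact: rst_refl. Qed.
Lemma eqK_s (x y : sV K) : eqV x y -> eqV y x. Proof. exact: rst_sym. Qed.
Lemma eqK_t (x y z : sV K) : eqV x y -> eqV y z -> eqV x z. Proof. exact: rst_trans. Qed.
Lemma eqW_r (x : sV omegaK) : eqV x x. Proof. exact: rst_refl. Qed.
Lemma eqW_s (x y : sV omegaK) : eqV x y -> eqV y x. Proof. exact: rst_sym. Qed.
Lemma eqW_t (x y z : sV omegaK) : eqV x y -> eqV y z -> eqV x z. Proof. exact: rst_trans. Qed.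

Definition is_mor {L L' : cplx} (p : morph L L') :=
 [/\ forall e, ends (mE p e) = (mV p (ends e).1, mV p (ends e).2),
     forall f i, bd (mF p f) i = mV p (bd f i),
     forall f i, fe (mF p f) i = mE p (fe f i) &
     forall f i, fo (mF p f) i = fo f i].

Lemma omega_mor L L' (p : morph L L') : is_mor p -> is_mor (@omega_morph _ _ p).
Proof.
case=> He Hb Hf Ho; split.
- by case=> [[[e []]|[f i]]|[f i]] /=; rewrite ?He ?Hf.
- by case=> f [i|] j //=; case: j => [[|[|[|[|?]]]] ?] /=; rewrite ?Hb ?Hf.
- by case=> f [i|] j //=; case: j => [[|[|[|[|?]]]] ?] /=; rewrite ?Hf ?Ho.
- by case=> f [i|] j //=; case: j => [[|[|[|[|?]]]] ?] /=; rewrite ?Ho.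
Qed.

Lemma iota_mor n : is_mor (Defs.iota n).
Proof. elim: n => [|n IH]; first by split. exact: omega_mor. Qed.

Lemma nxt_prv (i : 'I_5) : nxt (prv i) = i.
Proof. by apply: val_inj; case: i => [[|[|[|[|[|?]]]]] ?]. Qed.
Lemma prv_nxt (i : 'I_5) : prv (nxt i) = i.
Proof. by apply: val_inj; case: i => [[|[|[|[|[|?]]]]] ?]. Qed.

Definition wf (L : cplx) := forall (f : cF L) i, ends (fe f i) =
  if fo f i then (bd f i, bd f (nxt i)) else (bd f (nxt i), bd f i).

Lemma wf_omega L : wf L -> wf (omega L).
Proof.
move=> H [f [i|]] j //=.
case: j => [[|[|[|[|[|?]]]]] ?] //=.
- by rewrite (H f i); case: (fo f i).
- by rewrite nxt_prv.
- by rewrite (H f (prv i)) nxt_prv; case: (fo f (prv i)).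
Qed.

Lemma wf_Kn n : wf (Kn n).
Proof. elim: n => [|n IH]; [by [] | exact: wf_omega]. Qed.

End MA.
Import MA.
Module MC.

Notation kv m w := (existT (fun n => cV (Kn n)) m w : sV K).
Notation wv m w := (existT (fun n => cV (omega (Kn n))) m w : sV omegaK).
Notation DK := (dist_le K).
Notation DW := (dist_le omegaK).

Definition cost (i j : 'I_5) : nat := nth 0 [:: 2;2;3;4;3] ((j + 5 - i) %% 5).

Lemma offsets (i j : 'I_5) :
  j = i \/ j = nxt i \/ j = nxt (nxt i) \/ j = prv i \/ j = prv (prv i).
Proof.
case: i => [[|[|[|[|[|?]]]]] hi] //; case: j => [[|[|[|[|[|?]]]]] hj] //;
  (try by left; apply: val_inj);
  (try by right; left; apply: val_inj);
  (try by right; right; left; apply: val_inj);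
  (try by right; right; right; left; apply: val_inj);
  (try by right; right; right; right; apply: val_inj).
Qed.

Lemma cost_ge2 i j : 2 <= cost i j.
Proof. by case: i => [[|[|[|[|[|?]]]]] hi] //; case: j => [[|[|[|[|[|?]]]]] hj]. Qed.
Lemma cost_ring1 i j : cost (nxt i) j <= (cost i j).+1.
Proof. by case: i => [[|[|[|[|[|?]]]]] hi] //; case: j => [[|[|[|[|[|?]]]]] hj]. Qed.
Lemma cost_ring2 i j : cost i j <= (cost (nxt i) j).+1.
Proof. by case: i => [[|[|[|[|[|?]]]]] hi] //; case: j => [[|[|[|[|[|?]]]]] hj]. Qed.
Lemma cost0 i : cost i i = 2.
Proof. by case: i => [[|[|[|[|[|?]]]]] hi]. Qed.
Lemma cost1 i : cost i (nxt i) = 2.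
Proof. by case: i => [[|[|[|[|[|?]]]]] hi]. Qed.
Lemma cost2 i : cost i (nxt (nxt i)) = 3.
Proof. by case: i => [[|[|[|[|[|?]]]]] hi]. Qed.
Lemma cost3 i : cost i (prv i) = 3.
Proof. by case: i => [[|[|[|[|[|?]]]]] hi]. Qed.
Lemma cost4 i : cost i (prv (prv i)) = 4.
Proof. by case: i => [[|[|[|[|[|?]]]]] hi]. Qed.

End MC.
Import MC.
Module MD.
Set Implicit Arguments.

Lemma adjK_edge m (e : cE (Kn m)) : adj K (kv m (ends e).1) (kv m (ends e).2).
Proof. exists (existT _ m e); left; split; exact: eqK_r. Qed.
Arguments adjK_edge {m}.

Lemma adjK_face m (f : cF (Kn m)) j : adj K (kv m (bd f j)) (kv m (bd f (nxt j))).
Proof.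
have := adjK_edge (fe f j); rewrite (wf_Kn _ f j); case: (fo f j) => //=.
exact: adj_sym.
Qed.
Arguments adjK_face {m}.

Section V.
Variable v : sV K.

Lemma DK_adj x y r : DK v x r -> adj K x y -> DK v y r.+1.
Proof. apply: dist_snoc; [exact: eqK_r|exact: eqK_s|exact: eqK_t]. Qed.

Arguments DK_adj {x y r}.
Lemma DK_mono x r r' : r <= r' -> DK v x r -> DK v x r'.
Proof. exact: dist_mono. Qed.

Lemma DK_nxt m (f : cF (Kn m)) j r : DK v (kv m (bd f j)) r -> DK v (kv m (bd f (nxt j))) r.+1.
Proof. move=> h; apply: DK_adj h _; exact: adjK_face. Qed.

Lemma DK_prv m (f : cF (Kn m)) j r : DK v (kv m (bd f j)) r -> DK v (kv m (bd f (prv j))) r.+1.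
Proof.
move=> h; apply: DK_adj h _; apply: adj_sym.
by have := adjK_face f (prv j); rewrite nxt_prv.
Qed.

Arguments DK_nxt {m f j r}.
Arguments DK_prv {m f j r}.
Lemma DK_face m (f : cF (Kn m)) j r : DK v (kv m (bd f j)) r ->
  forall i, DK v (kv m (bd f i)) (r + 2).
Proof.
move=> h i; case: (offsets j i) => [->|[->|[->|[->|->]]]].
- by apply: (DK_mono _ _ h); lia.
- by apply: (DK_mono _ _ (DK_nxt h)); lia.
- by apply: (DK_mono _ _ (DK_nxt (DK_nxt h))); lia.
- by apply: (DK_mono _ _ (DK_prv h)); lia.
- by apply: (DK_mono _ _ (DK_prv (DK_prv h))); lia.
Qed.

Definition Qv (k m : nat) (x : oV (Kn m)) : Prop :=
  match x with
  | inl (inl w) => exists r, 2 * r <= k /\ DK v (kv m w) r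
  | inl (inr e) => exists r, 2 * r + 1 <= k /\
       (DK v (kv m (ends e).1) r \/ DK v (kv m (ends e).2) r)
  | inr (f, i) => exists j r, 2 * r + cost i j <= k /\ DK v (kv m (bd f j)) r
  end.

Arguments Qv k {m} x.
Definition Q (k : nat) (p : sV omegaK) : Prop := Qv k (projT2 p).

Lemma mid_of k m (f : cF (Kn m)) i r : 2 * r + 1 <= k ->
  DK v (kv m (bd f i)) r \/ DK v (kv m (bd f (nxt i))) r -> Qv k (mid _ (fe f i)).
Proof. move=> hk h; exists r; split=> //; rewrite (wf_Kn _ f i); case: (fo f i) => /=; tauto. Qed.

Lemma Q_edge k m (e : oE (Kn m)) :
  (Qv k (o_ends _ e).1 -> Qv k.+1 (o_ends _ e).2) /\
  (Qv k (o_ends _ e).2 -> Qv k.+1 (o_ends _ e).1).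
Proof.
case: e => [[[e []]|[f i]]|[f i]] /=; split.
- move=> [r [hr [h|h]]].
  + by exists r.+1; split; [lia| apply: DK_adj h (adjK_edge e)].
  + by exists r; split; [lia|].
- by move=> [r [hr h]]; exists r; split; [lia|right].
- by move=> [r [hr h]]; exists r; split; [lia|left].
- move=> [r [hr [h|h]]].
  + by exists r; split; [lia|].
  + by exists r.+1; split; [lia| apply: DK_adj h (@adj_sym _ _ _ (adjK_edge e))].
- move=> [j [r [hr h]]]; exists j, r; split=> //.
  by have := cost_ring1 i j; lia.
- move=> [j [r [hr h]]]; exists j, r; split=> //.
  by have := cost_ring2 i j; lia.
- move=> [j [r [hr h]]]; case: (offsets i j) hr h => [->|[->|[->|[->|->]]]] hr h.
  + by apply: (@mid_of _ _ _ _ r); [lia|left].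
  + by apply: (@mid_of _ _ _ _ r); [have := cost1 i; lia|right].
  + apply: (@mid_of _ _ _ _ r.+1); [have := cost2 i; lia|right].
    by have := DK_prv h; rewrite prv_nxt.
  + apply: (@mid_of _ _ _ _ r.+1); [have := cost3 i; lia|left].
    by have := DK_nxt h; rewrite nxt_prv.
  + apply: (@mid_of _ _ _ _ r.+2); [have := cost4 i; lia|left].
    by have := DK_nxt (DK_nxt h); rewrite !nxt_prv.
- move=> [r [hr]]; rewrite (wf_Kn _ f i); case: (fo f i) => /= -[h|h].
  + by exists i, r; rewrite cost0; split; [lia|].
  + by exists (nxt i), r; rewrite cost1; split; [lia|].
  + by exists (nxt i), r; rewrite cost1; split; [lia|].
  + by exists i, r; rewrite cost0; split; [lia|].
Qed.

Lemma DK_step n (w : cV (Kn n)) r :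
  DK v (kv n w) r <-> DK v (kv n.+1 (mV (Defs.iota n) w)) r.
Proof.
have h : eqV (kv n w) (kv n.+1 (mV (Defs.iota n) w)).
  by apply: rst_step; exists n, w.
split=> H; [exact: (@dist_eq _ eqK_t _ _ _ _ h H) | exact: (@dist_eq _ eqK_t _ _ _ _ (eqK_s _ _ h) H)].
Qed.

Lemma DK_up n (w : cV (Kn n)) r :
  DK v (kv n w) r -> DK v (kv n.+1 (mV (Defs.iota n) w)) r.
Proof. by case: (DK_step n w r). Qed.
Lemma DK_down n (w : cV (Kn n)) r :
  DK v (kv n.+1 (mV (Defs.iota n) w)) r -> DK v (kv n w) r.
Proof. by case: (DK_step n w r). Qed.

Lemma Q_step k n (x : oV (Kn n)) :
  Qv k x <-> Qv k (mV (@omega_morph _ _ (Defs.iota n)) x).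
Proof.
case: (iota_mor n) => He Hb _ _.
case: x => [[w|e]|[f i]].
- by split=> -[r [hr h]]; exists r; split=> //; [apply: DK_up | apply: DK_down].
- move: (He e) => /= He'; rewrite /= He' /=.
  split=> -[r [hr [h|h]]]; exists r; split=> //;
    by [left; apply: DK_up | right; apply: DK_up | left; apply: DK_down | right; apply: DK_down].
- move: (Hb f) => /= Hb'; rewrite /=.
  split=> -[j [r [hr h]]]; exists j, r; split=> //; rewrite ?Hb'.
  + exact: DK_up.
  + by apply: DK_down; rewrite -Hb'.
Qed.
End V.

End MD.
Import MD.
Module MG.

Section W.
Variable v : sV K.

Lemma Q_eq k (x y : sV omegaK) : eqV x y -> (Q v k x <-> Q v k y).
Proof.
elim=> {x y}.
- move=> p q [n [x [-> ->]]]; exact: Q_step.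
- by [].
- by move=> x y _ h; split=> /h.
- by move=> x y z _ h1 _ h2; split=> [/h1/h2|/h2/h1].
Qed.

Lemma Q_adj k (x y : sV omegaK) : adj omegaK x y -> Q v k x -> Q v k.+1 y.
Proof.
case=> [[m e] [[h1 h2]|[h1 h2]]] hq.
- have := (Q_eq k _ _ h1).1 hq => /= /((Q_edge v k m e).1) hq'.
  exact: (Q_eq k.+1 _ _ h2).2 hq'.
- have := (Q_eq k _ _ h1).1 hq => /= /((Q_edge v k m e).2) hq'.
  exact: (Q_eq k.+1 _ _ h2).2 hq'.
Qed.

Lemma Q_walk (x : sV omegaK) p k : walk omegaK x p -> Q v k x -> Q v (k + size p) (last x p).
Proof.
elim: p x k => [|y p IH] x k /=; first by rewrite addn0.
case=> ha hw hq; rewrite addnS -addSn; apply: IH=> //; exact: Q_adj ha hq.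
Qed.

Lemma Q_mono k k' x : k <= k' -> Q v k x -> Q v k' x.
Proof.
case: x => m [[w|e]|[f i]] /= hk.
- by case=> r [hr h]; exists r; split=> //; lia.
- by case=> r [hr h]; exists r; split=> //; lia.
- by case=> j [r [hr h]]; exists j, r; split=> //; lia.
Qed.

Lemma Q_start : Q v 0 (omega_v v).
Proof.
case: v => m w /=; exists 0; split=> //.
apply: dist_refl; exact: eqK_r.
Qed.

Lemma part1 n g : ball (omega_v v) (2 * n - 2) g -> omega_faces (ball v n) g.
Proof.
case: g => m [f o] hb.
have [i0 [p [hs [hw he]]]] : exists i0, DW (omega_v v) (wv m (cen _ f i0)) (2 * n - 2).
  case: o hb => [i|] hb.
  - by exists i; exact: (hb (Ordinal (isT : 2 < 5))).
  - by exists ord0; exact: (hb ord0).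
have hq := Q_walk _ _ 0 hw Q_start.
have hk : 0 + size p <= 2 * n - 2 by rewrite add0n.
have hq' : Q v (2 * n - 2) (last (omega_v v) p) by apply: Q_mono hk hq.
have := (Q_eq _ _ _ he).1 hq'.
move=> /= [j [r [hr h]]] i /=.
have := cost_ge2 i0 j => hc.
apply: (DK_mono _ _ (DK_face _ _ h i)); lia.
Qed.
End W.

End MG.
Import MG.
Module MH.

Lemma DW_snoc {x y z : sV omegaK} {r} : DW x y r -> adj omegaK y z -> DW x z r.+1.
Proof. apply: dist_snoc; [exact: eqW_r|exact: eqW_s|exact: eqW_t]. Qed.
Lemma DW_cons {x y z : sV omegaK} {r} : adj omegaK x y -> DW y z r -> DW x z r.+1.
Proof. exact: dist_cons. Qed.
Lemma DW_eq {x y y' : sV omegaK} {r} : eqV y y' -> DW x y r -> DW x y' r.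
Proof. apply: dist_eq; exact: eqW_t. Qed.
Lemma DW_mono {x y : sV omegaK} {r} r' : r <= r' -> DW x y r -> DW x y r'.
Proof. exact: dist_mono. Qed.

Lemma omega_eq (x y : sV K) : eqV x y -> eqV (omega_v x) (omega_v y).
Proof.
elim=> {x y}.
- move=> p q [n [x [-> ->]]]; apply: rst_step; by exists n, (old _ x).
- move=> x; exact: rst_refl.
- move=> x y _ h; exact: rst_sym.
- move=> x y z _ h1 _ h2; exact: rst_trans h2.
Qed.

Lemma adj_lift (x y : sV K) : adj K x y ->
  exists z, adj omegaK (omega_v x) z /\ adj omegaK z (omega_v y).
Proof.
case=> [[m e] [[h1 h2]|[h1 h2]]]; exists (wv m (mid _ e)).
- split.
  + exists (existT _ m (Defs.half _ e false)); left; split; [exact: omega_eq h1|exact: eqW_r].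
  + exists (existT _ m (Defs.half _ e true)); left; split; [exact: eqW_r|exact: omega_eq h2].
- split.
  + exists (existT _ m (Defs.half _ e true)); right; split; [exact: omega_eq h1|exact: eqW_r].
  + exists (existT _ m (Defs.half _ e false)); right; split; [exact: eqW_r|exact: omega_eq h2].
Qed.

Lemma walk_lift (x : sV K) p : walk K x p ->
  DW (omega_v x) (omega_v (last x p)) (2 * size p).
Proof.
elim: p x => [|y p IH] x /=; first by move=> _; apply: dist_refl; exact: eqW_r.
case=> ha hw; have [z [h1 h2]] := adj_lift _ _ ha.
rewrite mulnS; apply: (DW_cons h1); apply: (DW_cons h2); exact: IH.
Qed.

Lemma DK_lift v w r : DK v w r -> DW (omega_v v) (omega_v w) (2 * r).
Proof.
case=> p [hs [hw he]].
apply: (@DW_mono _ _ (2 * size p) (2 * r)); first by lia.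
exact: (DW_eq (omega_eq _ _ he) (walk_lift _ _ hw)).
Qed.

Lemma adjW_oldmid m (f : cF (Kn m)) j :
  adj omegaK (wv m (old _ (bd f j))) (wv m (mid _ (fe f j))).
Proof.
exists (existT _ m (Defs.half _ (fe f j) (~~ fo f j))) => /=.
rewrite (wf_Kn _ f j); case: (fo f j) => /=; [left|right]; split; exact: eqW_r.
Qed.

Lemma adjW_midcen m (f : cF (Kn m)) j :
  adj omegaK (wv m (mid _ (fe f j))) (wv m (cen _ f j)).
Proof. exists (existT _ m (spoke _ f j)); right; split; exact: eqW_r. Qed.

Lemma part2 v n g : omega_faces (ball v n) g -> ball (omega_v v) (2 * n + 2) g.
Proof.
case: g => m [f o] hb.
have hold : forall i, DW (omega_v v) (wv m (old _ (bd f i))) (2 * n).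
  by move=> i; exact: (DK_lift _ _ _ (hb i)).
have hmid : forall i, DW (omega_v v) (wv m (mid _ (fe f i))) (2 * n).+1.
  move=> i; exact: (DW_snoc (hold i) (adjW_oldmid _ f i)).
have hcen : forall i, DW (omega_v v) (wv m (cen _ f i)) (2 * n).+2.
  move=> i; exact: (DW_snoc (hmid i) (adjW_midcen _ f i)).
have hm : forall x r, r <= 2 * n + 2 -> DW (omega_v v) x r -> DW (omega_v v) x (2 * n + 2).
  by move=> x r hr; apply: DW_mono.
move=> j; case: o hb => [i|] hb /=.
- case: j => [[|[|[|[|[|?]]]]] ?] //=.
  + by apply: (hm _ _ _ (hold i)); lia.
  + by apply: (hm _ _ _ (hmid i)); lia.
  + by apply: (hm _ _ _ (hcen i)); lia.
  + by apply: (hm _ _ _ (hcen (prv i))); lia.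
  + by apply: (hm _ _ _ (hmid (prv i))); lia.
- by apply: (hm _ _ _ (hcen j)); lia.
Qed.

Lemma gen_mono (L : scplx) (P R : sF L -> Prop) :
  (forall f, P f -> R f) -> sub_incl (gen P) (gen R).
Proof.
move=> h; split; [|split].
- by move=> x [f [i [pf e]]]; exists f, i; split=> //; apply: h.
- by move=> x [f [i [pf e]]]; exists f, i; split=> //; apply: h.
- by move=> x [f [pf e]]; exists f; split=> //; apply: h.
Qed.


End MH.
Import MH.

Theorem lemmal (v : sV K) (n : nat) :
  sub_incl (gen (ball (omega_v v) (2 * n - 2))) (gen (omega_faces (ball v n))) /\
  sub_incl (gen (omega_faces (ball v n))) (gen (ball (omega_v v) (2 * n + 2))).
Proof.
split; apply: gen_mono; [exact: part1 | exact: part2].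
Qed.
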